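(* Let $x_+,x_-\in\hat A_n$ be complementary operators. Then (a) $[ia_k^\dagger a_k,[x_+,x_-]]=0$ for all $k\in\{1,\dots,n\}$, and (b) $[x_+,x_-]$ is a real linear combination of elements of the form $g_+^{(\tilde\alpha,\tilde\alpha)}=2i\,a^{(\tilde\alpha,\tilde\alpha)}$ with $\tilde\alpha\in\mathbb N_0^n$; i.e. $[x_+,x_-]\in\hat A_n^0\oplus\hat A_n^=$.
   Context: Fix $n\ge 1$. The Weyl algebra $A_n$ is the unital associative $\mathbb{C}$-algebra generated by $a_1,\dots,a_n,a_1^\dagger,\dots,a_n^\dagger$ subject to $[a_i,a_j^\dagger]=\delta_{ij}$ and $[a_i,a_j]=[a_i^\dagger,a_j^\dagger]=0$. For $\gamma=(\alpha,\beta)\in\mathbb N_0^{2n}$, $a^{\gamma}=(a_1^\dagger)^{\alpha_1}\cdots(a_n^\dagger)^{\alpha_n}a_1^{\beta_1}\cdots a_n^{\beta_n}$, $|\gamma|=\sum_j\alpha_j+\sum_j\beta_j$. The adjoint $\dagger$ is the conjugate-linear anti-automorphism with $(a_j)^\dagger=a_j^\dagger$, $(a_j^\dagger)^\dagger=a_j$. The skew-hermitian Weyl algebra is $\hat A_n=\{g\in A_n:g^\dagger=-g\}$, a real Lie algebra under the commutator; $g_+^\gamma=i((a^\gamma)^\dagger+a^\gamma)$. $\hat A_n^0$ is the real span of $2i$ and $2ia_k^\dagger a_k$; $\hat A_n^=$ is the real span of $2i\,a^{(\alpha,\alpha)}$ with $2|\alpha|\ge4$. Two elements $x_+,x_-\in\hat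 A_n$, neither lying in $\hat A_n^0\oplus\hat A_n^=$, are called complementary if for each $k\in\{1,\dots,n\}$ either (a) $[ia_k^\dagger a_k,x_\sigma]=0$ for both $\sigma\in\{+,-\}$, or (b) there is a real $\mu_k\neq0$ with $[ia_k^\dagger a_k,x_\sigma]=\sigma\mu_k x_{-\sigma}$ for both $\sigma\in\{+,-\}$ (signs identified with $\pm1$), and at least one index $k$ satisfies (b). *)

(* Defs.v *)
From HB Require Import structures.
From mathcomp Require Import all_boot all_order all_algebra all_field.
From mathcomp Require Import mpoly.

Set Implicit Arguments.
Unset Strict Implicit.
Unset Printing Implicit Defensive.

Import Order.TTheory GRing.Theory Num.Theory.
Local Open Scope ring_scope.

(* The Weyl algebra A_n, realised on its normal-ordered (PBW) basis.          *)
(* An element of A_n is a finite C-linear combination of the normal-ordered   *)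
(* monomials a^(alpha,beta) = (a_1^+)^alpha_1 .. (a_n^+)^alpha_n              *)
(*                            a_1^beta_1 .. a_n^beta_n.                       *)
(* We store it as a polynomial in 2n commuting variables over algC: the       *)
(* variable (lshift n j) stands for a_j^+ and (rshift n j) for a_j, and the   *)
(* monomial 'X_[m] stands for a^(alpha,beta) with alpha_j = m (lshift n j),   *)
(* beta_j = m (rshift n j).  The (noncommutative) Weyl product is defined     *)
(* below by the normal-ordering (Wick) formula; the additive structure and    *)
(* scalar multiplication are those of {mpoly algC[n+n]}.                      *)

Definition weyl (n : nat) := {mpoly algC[n + n]}.

Definition alphaE n (m : 'X_{1..n + n}) (j : 'I_n) : nat := m (lshift n j).
Definition betaE n (m : 'X_{1..n + n}) (j : 'I_n) : nat := m (rshift n j).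

Definition mkexp n (al be : 'I_n -> nat) : 'X_{1..n + n} :=
  [multinom (match split i with inl j => al j | inr j => be j end) | i < n + n].

(* Product of normal-ordered monomials, one mode at a time:
   (a^+^al a^be)(a^+^ga a^de)
     = sum_k C(be,k) C(ga,k) k! a^+^(al+ga-k) a^(be+de-k).
   The k_j range over 'I_N with N larger than every be_j; the binomial factor
   C(be_j,k_j) vanishes for k_j > be_j, so the sum is the exact one. *)
Definition wmono n (m1 m2 : 'X_{1..n + n}) : weyl n :=
  let N := (mdeg m1).+1 in
  \sum_(k : {ffun 'I_n -> 'I_N})
     (\prod_(j < n) ('C(betaE m1 j, k j) * 'C(alphaE m2 j, k j) * (k j)`!))%N%:R
     *: 'X_[mkexp (fun j => alphaE m1 j + alphaE m2 j - k j)%N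
                  (fun j => betaE m1 j + betaE m2 j - k j)%N].

Definition wmul n (p q : weyl n) : weyl n :=
  \sum_(m1 <- msupp p) \sum_(m2 <- msupp q) (p@_m1 * q@_m2) *: wmono m1 m2.

Definition wcomm n (p q : weyl n) : weyl n := wmul p q - wmul q p.

(* the adjoint: conjugate-linear anti-automorphism with a_j <-> a_j^+;
   on the basis, (a^(alpha,beta))^+ = a^(beta,alpha) *)
Definition wdag n (p : weyl n) : weyl n :=
  \sum_(m <- msupp p) (p@_m)^* *: 'X_[mkexp (betaE m) (alphaE m)].

Definition skew_herm n (g : weyl n) : Prop := wdag g = - g.

Definition amono n (al be : 'I_n -> nat) : weyl n := 'X_[mkexp al be].

Definition numop n (k : 'I_n) : weyl n :=
  'i *: amono (fun j => (j == k)%N : nat) (fun j => (j == k)%N : nat).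

(* \hat A_n^0 (+) \hat A_n^= : the real span of 2 i a^(alpha,alpha),
   alpha ranging over all of N_0^n (|alpha| = 0 gives 2i, |alpha| = 1 gives
   2 i a_k^+ a_k, |alpha| >= 2 gives \hat A_n^=). *)
Definition in_A0_Aeq n (g : weyl n) : Prop :=
  exists s : seq ((nat ^ n)%type * algC),
    all (fun x => x.2 \is Num.real) s /\
    g = \sum_(x <- s) x.2 *: ((2%:R * 'i) *: amono x.1 x.1).

Definition mode_cond n (xp xm : weyl n) (k : 'I_n) (mu : algC) : Prop :=
  mu \is Num.real /\ mu != 0 /\
  wcomm (numop k) xp = mu *: xm /\ wcomm (numop k) xm = - (mu *: xp).

Definition complementary n (xp xm : weyl n) : Prop :=
  skew_herm xp /\ skew_herm xm /\ ~ in_A0_Aeq xp /\ ~ in_A0_Aeq xm /\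
  (forall k : 'I_n,
     (wcomm (numop k) xp = 0 /\ wcomm (numop k) xm = 0) \/
     (exists mu, mode_cond xp xm k mu)) /\
  (exists k : 'I_n, exists mu, mode_cond xp xm k mu).

(* Main.v *)
Require Import Defs.
From HB Require Import structures.
From mathcomp Require Import all_boot all_order all_algebra all_field.
From mathcomp Require Import mpoly.
From mathcomp Require Import ring.
Import GRing.Theory Num.Theory.
Local Open Scope ring_scope.
Set Implicit Arguments.


Section W.
Variable n : nat.
Implicit Types (p q : weyl n) (m : 'X_{1..n+n}).

Lemma alphaE_mk (a b : 'I_n -> nat) j : alphaE (mkexp a b) j = a j.
Proof. by rewrite /alphaE /mkexp mnmE -[lshift n j]/(unsplit (inl j)) unsplitK. Qed.
Lemma betaE_mk (a b : 'I_n -> nat) j : betaE (mkexp a b) j = b j.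
Proof. by rewrite /betaE /mkexp mnmE -[rshift n j]/(unsplit (inr j)) unsplitK. Qed.
Lemma mkexpK m : mkexp (alphaE m) (betaE m) = m.
Proof.
apply/mnmP=> i; rewrite /mkexp mnmE /alphaE /betaE.
by case: splitP => j hj; congr (m _); apply: val_inj.
Qed.
Lemma mkexp_eq (a b a' b' : 'I_n -> nat) : a =1 a' -> b =1 b' -> mkexp a b = mkexp a' b'.
Proof. by move=> ha hb; apply/mnmP=> i; rewrite /mkexp !mnmE; case: split. Qed.
Lemma mkexp_inj (a b a' b' : 'I_n -> nat) : mkexp a b = mkexp a' b' -> a =1 a' /\ b =1 b'.
Proof. by move=> h; split=> j; [rewrite -(alphaE_mk a b) h alphaE_mk|rewrite -(betaE_mk a b) h betaE_mk]. Qed.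
Lemma mnm_le_mdeg m i : (m i <= mdeg m)%N.
Proof. by rewrite mdegE (bigD1 i) //= leq_addr. Qed.
Lemma betaE_le m j : (betaE m j <= mdeg m)%N.
Proof. exact: mnm_le_mdeg. Qed.
Lemma alphaE_le m j : (alphaE m j <= mdeg m)%N.
Proof. exact: mnm_le_mdeg. Qed.

Lemma big_supp (V : zmodType) (s : seq 'X_{1..n+n}) p (F : 'X_{1..n+n} -> V) :
  uniq s -> {subset msupp p <= s} -> (forall m, p@_m = 0 -> F m = 0) ->
  \sum_(m <- s) F m = \sum_(m <- msupp p) F m.
Proof.
move=> us sub hF; rewrite (bigID (mem (msupp p))) /= [X in _ + X]big1 ?addr0; last first.
  by move=> m hm; apply: hF; apply/eqP; rewrite mcoeff_eq0.
rewrite -big_filter; apply: perm_big; apply: uniq_perm.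
- exact: filter_uniq. - exact: msupp_uniq.
by move=> m; rewrite mem_filter; case: (boolP (m \in msupp p)) => // /sub ->.
Qed.

Arguments big_supp {V s p F}.
Lemma wmulE p q (s1 s2 : seq 'X_{1..n+n}) : uniq s1 -> uniq s2 ->
  {subset msupp p <= s1} -> {subset msupp q <= s2} ->
  wmul p q = \sum_(m1 <- s1) \sum_(m2 <- s2) (p@_m1 * q@_m2) *: wmono m1 m2.
Proof.
move=> u1 u2 h1 h2; rewrite /wmul (big_supp u1 h1); last first.
  by move=> m ->; apply: big1 => ? _; rewrite mul0r scale0r.
apply: eq_bigr=> m1 _; rewrite (big_supp u2 h2) // => m ->.
by rewrite mulr0 scale0r.
Qed.
End W.


Section W.
Variable n : nat.
Implicit Types (p q : weyl n) (m : 'X_{1..n+n}).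

Lemma coef_sumX (s : seq 'X_{1..n+n}) (c : 'X_{1..n+n} -> algC) f g m0 :
  uniq s -> cancel f g -> cancel g f ->
  (\sum_(m <- s) c m *: ('X_[f m] : weyl n))@_m0 = if g m0 \in s then c (g m0) else 0.
Proof.
move=> us fK gK; rewrite raddf_sum /=.
under eq_bigr => m _ do rewrite mcoeffZ mcoeffX.
have E m : (f m == m0) = (m == g m0).
  by apply/eqP/eqP => [<-|->]; [rewrite fK|rewrite gK].
case: ifP => hs.
  rewrite (bigD1_seq (g m0)) //= E eqxx mulr1 big1 ?addr0 // => m /negbTE hm.
  by rewrite E hm mulr0.
rewrite big_seq big1 // => m ms; rewrite E.
by case: eqP ms hs => [->->|] //; rewrite mulr0.
Qed.

Definition dd (k : 'I_n) m : algC := 'i * ((alphaE m k)%:R - (betaE m k)%:R).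
Definition D (k : 'I_n) p : weyl n := \sum_(m <- msupp p) (dd k m * p@_m) *: 'X_[m].

Lemma D_coef k p m : (D k p)@_m = dd k m * p@_m.
Proof.
rewrite /D (@coef_sumX (msupp p) _ id id) ?msupp_uniq //.
by case: ifP => // /negbT; rewrite -mcoeff_eq0 => /eqP ->; rewrite mulr0.
Qed.

Lemma D_add k : {morph D k : x y / x + y}.
Proof. by move=> x y; apply/mpolyP=> m; rewrite mcoeffD !D_coef mcoeffD mulrDr. Qed.
Lemma D0 k : D k 0 = 0.
Proof. by apply/mpolyP=> m; rewrite D_coef !mcoeff0 mulr0. Qed.
Lemma D_opp k p : D k (- p) = - D k p.
Proof. by apply/mpolyP=> m; rewrite mcoeffN !D_coef mcoeffN mulrN. Qed.
Lemma D_sub k p q : D k (p - q) = D k p - D k q.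
Proof. by rewrite D_add D_opp. Qed.
Lemma D_scale k c p : D k (c *: p) = c *: D k p.
Proof. by apply/mpolyP=> m; rewrite mcoeffZ !D_coef mcoeffZ mulrCA. Qed.
Lemma D_X k m : D k 'X_[m] = dd k m *: 'X_[m].
Proof. by apply/mpolyP=> m'; rewrite mcoeffZ !D_coef !mcoeffX; case: eqP=> [->|]; rewrite ?mulr1 ?mulr0. Qed.
Lemma D_sum k (I : Type) (r : seq I) (P : pred I) (F : I -> weyl n) :
  D k (\sum_(i <- r | P i) F i) = \sum_(i <- r | P i) D k (F i).
Proof. exact: (big_morph _ (D_add k) (D0 k)). Qed.

Lemma prodn_nz (F : 'I_n -> nat) : (\prod_(j < n) F j != 0)%N -> forall j, F j != 0%N.
Proof. by move=> h j; apply: contraNneq h => hj; rewrite (bigD1 j) //= hj. Qed.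

Lemma D_wmono k m1 m2 : D k (wmono m1 m2) = (dd k m1 + dd k m2) *: wmono m1 m2.
Proof.
rewrite /wmono D_sum scaler_sumr; apply: eq_bigr => kk _.
rewrite D_scale D_X scalerA scalerA; congr (_ *: _).
set P := (\prod_(j < n) _)%N.
case: (boolP (P == 0%N)) => [/eqP->|hP]; first by rewrite mul0r mulr0.
have := prodn_nz _ hP k; rewrite !muln_eq0 negb_or negb_or => /andP[/andP[h1 h2] _].
rewrite -lt0n bin_gt0 in h1; rewrite -lt0n bin_gt0 in h2.
rewrite mulrC; congr (_ * _).
rewrite /dd alphaE_mk betaE_mk !natrB ?(leq_trans h1 (leq_addl _ _)) ?(leq_trans h2 (leq_addl _ _)) ?(leq_trans h1 (leq_addr _ _)) //.
rewrite !natrD; ring.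
Qed.
End W.


Section W.
Variable n : nat.
Implicit Types (p q : weyl n) (m : 'X_{1..n+n}).

Lemma sumG (V : zmodType) N (F : ('I_n -> nat) -> V) (k0 : 'I_n) :
  (forall f g, f =1 g -> F f = F g) ->
  (forall f, (exists2 j, j != k0 & f j != 0%N) \/ (1 < f k0)%N -> F f = 0) ->
  \sum_(kk : {ffun 'I_n -> 'I_N.+1}) F (fun j => kk j) =
  F (fun _ => 0%N) + (if (1 < N.+1)%N then F (fun j => (j == k0) : nat) else 0).
Proof.
move=> Fext H.
rewrite (bigD1 [ffun _ => ord0]) //=; congr (_ + _); first by apply: Fext => j; rewrite ffunE.
case: N => [|N] /=.
  apply: big1 => kk hk; case/eqP: hk; apply/ffunP=> j; rewrite !ffunE.
  by apply/val_inj; case: (kk j) => -[].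
have dz : [ffun j => if j == k0 then @Ordinal N.+2 1 isT else ord0] != [ffun _ => ord0].
  by apply/eqP => /ffunP /(_ k0); rewrite !ffunE eqxx => /(congr1 val).
rewrite (bigD1 [ffun j => if j == k0 then @Ordinal N.+2 1 isT else ord0]) /=; last by rewrite dz.
rewrite big1 ?addr0; first by apply: Fext => j; rewrite ffunE; case: eqP.
move=> kk /andP[nz nd]; apply: H.
case: (boolP [exists j, (j != k0) && (kk j != 0%N :> nat)]) => [/existsP[j /andP[a b]]|hne].
  by left; exists j.
right; rewrite ltnNge; apply/negP => le1.
have hj j : j != k0 -> nat_of_ord (kk j) = 0%N.
  move=> jk; apply/eqP; apply: contraNT hne => hh; apply/existsP; exists j; by rewrite jk.
have hk : (nat_of_ord (kk k0) == 0%N) || (nat_of_ord (kk k0) == 1%N) by case: (nat_of_ord (kk k0)) le1 => [|[]].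
case/orP: hk => /eqP e0.
  move/eqP: nz; apply; apply/ffunP => j; rewrite ffunE; apply/val_inj => /=.
  by case: (eqVneq j k0) => [->|/hj].
move/eqP: nd; apply; apply/ffunP => j; rewrite ffunE; apply/val_inj => /=.
by case: (eqVneq j k0) => [->|/hj].
Qed.
End W.


Section W.
Variable n : nat.
Implicit Types (p q : weyl n) (m : 'X_{1..n+n}).

Definition wterm m1 m2 (f : 'I_n -> nat) : weyl n :=
  (\prod_(j < n) ('C(betaE m1 j, f j) * 'C(alphaE m2 j, f j) * (f j)`!))%N%:R *:
  'X_[mkexp (fun j => alphaE m1 j + alphaE m2 j - f j)%N (fun j => betaE m1 j + betaE m2 j - f j)%N].

Lemma wmonoE m1 m2 : wmono m1 m2 = \sum_(kk : {ffun 'I_n -> 'I_(mdeg m1).+1}) wterm m1 m2 (fun j => kk j).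
Proof. by []. Qed.

Lemma wterm_ext m1 m2 f g : f =1 g -> wterm m1 m2 f = wterm m1 m2 g.
Proof.
move=> e; rewrite /wterm (eq_bigr (fun j => ('C(betaE m1 j, g j) * 'C(alphaE m2 j, g j) * (g j)`!)%N)); last by move=> j _; rewrite e.
by rewrite (mkexp_eq (b' := fun j => (betaE m1 j + betaE m2 j - g j)%N) (a' := fun j => (alphaE m1 j + alphaE m2 j - g j)%N)) // => j; rewrite e.
Qed.

Lemma wterm_van m1 m2 f j : (betaE m1 j < f j)%N \/ (alphaE m2 j < f j)%N -> wterm m1 m2 f = 0.
Proof.
move=> h; rewrite /wterm (bigD1 j) //=.
case: h => h; [rewrite (bin_small h) !mul0n | rewrite (bin_small h) muln0 mul0n]; apply: scale0r.
Qed.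

Lemma wterm0 m1 m2 : wterm m1 m2 (fun _ => 0%N) =
  'X_[mkexp (fun j => alphaE m1 j + alphaE m2 j)%N (fun j => betaE m1 j + betaE m2 j)%N].
Proof.
rewrite /wterm big1 ?scale1r; last by move=> j _; rewrite !bin0.
by apply: congr1; apply: mkexp_eq => j; rewrite subn0.
Qed.

Lemma wtermd m1 m2 (k : 'I_n) : wterm m1 m2 (fun j => (j == k) : nat) =
  (betaE m1 k * alphaE m2 k)%N%:R *:
  'X_[mkexp (fun j => alphaE m1 j + alphaE m2 j - (j == k))%N (fun j => betaE m1 j + betaE m2 j - (j == k))%N].
Proof.
rewrite /wterm (bigD1 k) //= big1 ?muln1 ?eqxx ?bin1 ?muln1 //.
by move=> j /negbTE ->; rewrite !bin0.
Qed.

Definition del (k : 'I_n) : 'I_n -> nat := fun j => (j == k)%N : nat.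
Definition ee (k : 'I_n) := mkexp (del k) (del k).

Lemma numopE k : numop k = 'i *: 'X_[ee k].
Proof. by []. Qed.

Lemma wmono_em k m : wmono (ee k) m =
  'X_[mkexp (fun j => alphaE m j + del k j)%N (fun j => betaE m j + del k j)%N] + (alphaE m k)%:R *: 'X_[m].
Proof.
rewrite wmonoE (sumG _ _ (wterm _ _) k); last 2 first.
- by move=> f g; apply: wterm_ext.
- move=> f [[j jk fj]|h]; [apply: (wterm_van _ _ _ j) | apply: (wterm_van _ _ _ k)]; left;
  rewrite /ee betaE_mk /del; [by rewrite (negbTE jk) lt0n| by rewrite eqxx].
rewrite wterm0 ifT; last by have := alphaE_le (ee k) k; rewrite /ee alphaE_mk /del eqxx.
rewrite wtermd betaE_mk /del eqxx mul1n; congr (_ + _).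
  by apply: congr1; apply: mkexp_eq => j; rewrite /ee ?alphaE_mk ?betaE_mk addnC.
congr (_ *: _); rewrite -{3}(mkexpK _ m); congr 'X_[_]; apply: mkexp_eq => j;
  by rewrite /ee ?alphaE_mk ?betaE_mk addKn.
Qed.

Lemma wmono_me k m : wmono m (ee k) =
  'X_[mkexp (fun j => alphaE m j + del k j)%N (fun j => betaE m j + del k j)%N] + (betaE m k)%:R *: 'X_[m].
Proof.
rewrite wmonoE (sumG _ _ (wterm _ _) k); last 2 first.
- by move=> f g; apply: wterm_ext.
- move=> f [[j jk fj]|h]; [apply: (wterm_van _ _ _ j) | apply: (wterm_van _ _ _ k)]; right;
  rewrite /ee alphaE_mk /del; [by rewrite (negbTE jk) lt0n| by rewrite eqxx].
rewrite wterm0; congr (_ + _).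
  by apply: congr1; apply: mkexp_eq => j; rewrite /ee ?alphaE_mk ?betaE_mk.
case: ifP => h.
  rewrite wtermd alphaE_mk /del eqxx muln1.
  congr (_ *: _); rewrite -{3}(mkexpK _ m); congr 'X_[_]; apply: mkexp_eq => j;
    by rewrite /ee ?alphaE_mk ?betaE_mk addnK.
have := betaE_le m k; move: h; case: (mdeg m) => // _; rewrite leqn0 => /eqP ->.
by rewrite scale0r.
Qed.

Lemma wmono_comm k m : wmono (ee k) m - wmono m (ee k) =
  ((alphaE m k)%:R - (betaE m k)%:R) *: 'X_[m].
Proof. by rewrite wmono_em wmono_me scalerBl opprD addrACA subrr add0r. Qed.
End W.


Section W.
Variable n : nat.
Implicit Types (p q : weyl n) (m : 'X_{1..n+n}).

Lemma supp_le p q : (forall m, p@_m = 0 -> q@_m = 0) -> {subset msupp q <= msupp p}.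
Proof.
move=> h m; rewrite !mcoeff_msupp; apply: contraNN => /eqP /h ->; by [].
Qed.

Lemma wmulZl c p q : wmul (c *: p) q = c *: wmul p q.
Proof.
rewrite (wmulE _ _ (msupp_uniq p) (msupp_uniq q)) //; last first.
  by apply: supp_le => m; rewrite mcoeffZ => ->; rewrite mulr0.
rewrite /wmul scaler_sumr; apply: eq_bigr => m1 _; rewrite scaler_sumr.
by apply: eq_bigr => m2 _; rewrite mcoeffZ scalerA mulrA.
Qed.

Lemma wmulZr c p q : wmul p (c *: q) = c *: wmul p q.
Proof.
rewrite (wmulE _ _ (msupp_uniq p) (msupp_uniq q)) //; last first.
  by apply: supp_le => m; rewrite mcoeffZ => ->; rewrite mulr0.
rewrite /wmul scaler_sumr; apply: eq_bigr => m1 _; rewrite scaler_sumr.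
by apply: eq_bigr => m2 _; rewrite mcoeffZ scalerA mulrCA.
Qed.

Lemma wmul_D k p q : D k (wmul p q) = wmul (D k p) q + wmul p (D k q).
Proof.
rewrite (wmulE (D k p) _ (msupp_uniq p) (msupp_uniq q)) //; last first.
  by apply: supp_le => m; rewrite D_coef => ->; rewrite mulr0.
rewrite (wmulE p (D k q) (msupp_uniq p) (msupp_uniq q)) //; last first.
  by apply: supp_le => m; rewrite D_coef => ->; rewrite mulr0.
rewrite /wmul D_sum -big_split; apply: eq_bigr => m1 _.
rewrite D_sum -big_split; apply: eq_bigr => m2 _.
rewrite D_scale D_wmono !D_coef scalerA /=. rewrite -scalerDl; congr (_ *: _); ring.
Qed.

Lemma wcomm_numop k q : wcomm (numop k) q = D k q.
Proof.
have hs : {subset msupp (numop k) <= [:: ee k]}.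
  by move=> m; rewrite numopE => /msuppZ_le; rewrite msuppX.
rewrite /wcomm (wmulE (numop k) q (isT : uniq [:: ee k]) (msupp_uniq q)) //.
rewrite (wmulE q (numop k) (msupp_uniq q) (isT : uniq [:: ee k])) //.
rewrite big_cons big_nil addr0 numopE /D.
under [X in _ - X]eq_bigr => m _ do rewrite big_cons big_nil addr0.
rewrite -sumrB; apply: eq_bigr => m _.
rewrite !mcoeffZ !mcoeffX eqxx mulr1 [q@_m * _]mulrC -scalerBr wmono_comm scalerA.
by congr (_ *: _); rewrite /dd; ring.
Qed.

Lemma wmul0l q : wmul 0 q = 0.
Proof. by rewrite -[X in wmul X _](scale0r 0) wmulZl scale0r. Qed.
Lemma wmul0r q : wmul q 0 = 0.
Proof. by rewrite -[X in wmul _ X](scale0r 0) wmulZr scale0r. Qed.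

Lemma wcomm_same p : wcomm p p = 0.
Proof. exact: subrr. Qed.

Lemma partA xp xm (k : 'I_n) :
  ((wcomm (numop k) xp = 0 /\ wcomm (numop k) xm = 0) \/ (exists mu, mode_cond xp xm k mu)) ->
  wcomm (numop k) (wcomm xp xm) = 0.
Proof.
move=> H; rewrite wcomm_numop /wcomm D_sub !wmul_D.
case: H => [[h1 h2]|[mu [_ [_ [h1 h2]]]]]; rewrite !wcomm_numop in h1 h2.
  by rewrite h1 h2 !wmul0l !wmul0r !addr0 subrr.
rewrite h1 h2 -scaleNr !wmulZl !wmulZr !scaleNr.
set A := wmul xm xm; set B := wmul xp xp.
by rewrite opprD opprK addrC addrA addrNK subrr.
Qed.
End W.


Section W.
Variable n : nat.
Implicit Types (p q : weyl n) (m : 'X_{1..n+n}).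

Definition sw m := mkexp (betaE m) (alphaE m).
Lemma swK : involutive sw.
Proof. by move=> m; rewrite {1}/sw -[RHS]mkexpK; apply: mkexp_eq => j; rewrite /sw ?alphaE_mk ?betaE_mk. Qed.

Lemma wdag_coef p m : (wdag p)@_m = (p@_(sw m))^*.
Proof.
rewrite /wdag (@coef_sumX _ (msupp p) _ sw sw) ?msupp_uniq //; try exact: swK.
by case: ifP => // /negbT; rewrite -mcoeff_eq0 => /eqP ->; rewrite conjC0.
Qed.

Lemma wdag_add : {morph (@wdag n) : x y / x + y}.
Proof. by move=> x y; apply/mpolyP=> m; rewrite mcoeffD !wdag_coef mcoeffD rmorphD. Qed.
Lemma wdag0 : wdag (0 : weyl n) = 0.
Proof. by apply/mpolyP=> m; rewrite wdag_coef !mcoeff0 conjC0. Qed.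
Lemma wdag_opp p : wdag (- p) = - wdag p.
Proof. by apply/mpolyP=> m; rewrite mcoeffN !wdag_coef mcoeffN rmorphN. Qed.
Lemma wdag_sub p q : wdag (p - q) = wdag p - wdag q.
Proof. by rewrite wdag_add wdag_opp. Qed.
Lemma wdag_scale c p : wdag (c *: p) = c^* *: wdag p.
Proof. by apply/mpolyP=> m; rewrite mcoeffZ !wdag_coef mcoeffZ rmorphM. Qed.
Lemma wdag_sum (I : Type) (r : seq I) (P : pred I) (F : I -> weyl n) :
  wdag (\sum_(i <- r | P i) F i) = \sum_(i <- r | P i) wdag (F i).
Proof. exact: (big_morph _ wdag_add wdag0). Qed.
Lemma wdag_X m : wdag 'X_[m] = 'X_[sw m].
Proof.
apply/mpolyP=> m'; rewrite wdag_coef !mcoeffX conjC_nat.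
by rewrite (can2_eq swK swK).
Qed.

Lemma sum_widen (V : zmodType) N M (F : ('I_n -> nat) -> V) :
  (N.+1 <= M)%N -> (forall f g, f =1 g -> F f = F g) ->
  (forall f j, (N.+1 <= f j)%N -> F f = 0) ->
  \sum_(kk : {ffun 'I_n -> 'I_N.+1}) F (fun j => kk j) =
  \sum_(kk : {ffun 'I_n -> 'I_M}) F (fun j => kk j).
Proof.
move=> le Fext Fv.
rewrite [RHS](bigID (fun kk : {ffun 'I_n -> 'I_M} => [forall j, kk j < N.+1]%N)) /=.
rewrite [X in _ = _ + X]big1 ?addr0; last first.
  move=> kk /forallPn [j]; rewrite -leqNgt => hj; exact: Fv hj.
rewrite (reindex_onto (fun kk : {ffun 'I_n -> 'I_N.+1} => [ffun j => widen_ord le (kk j)])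
   (fun kk : {ffun 'I_n -> 'I_M} => [ffun j => (inord (kk j) : 'I_N.+1)])) /=; last first.
  move=> kk /forallP h; apply/ffunP => j; rewrite !ffunE; apply/val_inj => /=.
  by rewrite inordK.
symmetry; apply: eq_big => [kk|kk _].
  apply/andP; split; first by apply/forallP => j; rewrite ffunE /=.
  by apply/eqP/ffunP => j; rewrite !ffunE; apply/val_inj; rewrite /= inordK.
by apply: Fext => j; rewrite ffunE.
Qed.

Definition wsum M m1 m2 := \sum_(kk : {ffun 'I_n -> 'I_M}) wterm m1 m2 (fun j => kk j).

Lemma wmono_wsum M m1 m2 : ((mdeg m1).+1 <= M)%N -> wmono m1 m2 = wsum M m1 m2.
Proof.
move=> le; rewrite wmonoE /wsum (sum_widen _ _ _ (wterm m1 m2) le) //.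
  by move=> f g; apply: wterm_ext.
move=> f j hj; apply: (wterm_van _ _ _ j); left.
exact: leq_ltn_trans (betaE_le m1 j) hj.
Qed.

Lemma wdag_wterm m1 m2 f : wdag (wterm m1 m2 f) = wterm (sw m2) (sw m1) f.
Proof.
rewrite /wterm wdag_scale wdag_X conjC_nat; congr (_ *: 'X_[_]).
  congr (_%:R); apply: eq_bigr => j _.
  by rewrite /sw alphaE_mk betaE_mk [('C(betaE m1 j, _) * _)%N]mulnC.
rewrite /sw; apply: mkexp_eq => j; rewrite ?alphaE_mk ?betaE_mk addnC //.
Qed.

Lemma wdag_wmono m1 m2 : wdag (wmono m1 m2) = wmono (sw m2) (sw m1).
Proof.
rewrite (wmono_wsum _ m1 m2 (leq_addr (mdeg (sw m2)).+1 (mdeg m1).+1)).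
rewrite (wmono_wsum _ (sw m2) (sw m1) (leq_addl (mdeg m1).+1 (mdeg (sw m2)).+1)).
by rewrite /wsum wdag_sum; apply: eq_bigr => kk _; rewrite wdag_wterm.
Qed.

Lemma wdag_wmul p q : wdag (wmul p q) = wmul (wdag q) (wdag p).
Proof.
have swI : injective sw by apply: inv_inj swK.
have hsub r : {subset msupp (wdag r) <= map sw (msupp r)}.
  move=> m; rewrite mcoeff_msupp wdag_coef => h.
  rewrite -[m]swK; apply: map_f; rewrite mcoeff_msupp.
  by apply: contraNneq h => ->; rewrite conjC0.
have u (r : weyl n) : uniq (map sw (msupp r)) by rewrite (map_inj_uniq swI) msupp_uniq.
rewrite (wmulE _ _ (u q) (u p) (hsub q) (hsub p)).
rewrite /wmul wdag_sum [RHS]big_map.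
under [RHS]eq_bigr => m _ do rewrite big_map.
rewrite [RHS]exchange_big /=; apply: eq_bigr => m1 _.
rewrite wdag_sum; apply: eq_bigr => m2 _.
by rewrite wdag_scale wdag_wmono !wdag_coef !swK rmorphM mulrC.
Qed.
End W.


Section W.
Variable n : nat.
Implicit Types (p q : weyl n) (m : 'X_{1..n+n}).

Lemma wmulNl p q : wmul (- p) q = - wmul p q.
Proof. by rewrite -scaleN1r wmulZl scaleN1r. Qed.
Lemma wmulNr p q : wmul p (- q) = - wmul p q.
Proof. by rewrite -scaleN1r wmulZr scaleN1r. Qed.

Lemma skew_comm (xp xm : weyl n) : wdag xp = - xp -> wdag xm = - xm ->
  wdag (wcomm xp xm) = - wcomm xp xm.
Proof.
move=> hp hm; rewrite /wcomm wdag_sub !wdag_wmul hp hm !wmulNl !wmulNr !opprK.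
by rewrite opprB.
Qed.

Lemma partB (c : weyl n) : (forall k, D k c = 0) -> wdag c = - c -> in_A0_Aeq c.
Proof.
move=> hD hdag.
have hab m : m \in msupp c -> forall j, alphaE m j = betaE m j.
  rewrite mcoeff_msupp => cm j.
  have := congr1 (mcoeff m) (hD j); rewrite D_coef mcoeff0 => /eqP.
  rewrite mulf_eq0 (negbTE cm) orbF /dd mulf_eq0 (negbTE (neq0Ci _)) /= subr_eq0 eqr_nat.
  by move/eqP.
have diag m : m \in msupp c -> sw _ m = m.
  move=> hm; rewrite /sw -[RHS](mkexpK _ m); apply: mkexp_eq => j; by rewrite hab.
have im m : m \in msupp c -> (c@_m)^* = - c@_m.
  by move=> hm; have := congr1 (mcoeff m) hdag; rewrite wdag_coef diag // mcoeffN.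
have nz : (2%:R * 'i : algC) != 0 by rewrite mulf_neq0 ?neq0Ci ?pnatr_eq0.
exists (map (fun m => ([ffun j => alphaE m j], c@_m / (2%:R * 'i))) (msupp c)).
split.
  apply/allP => x /mapP [m hm ->] /=; apply/CrealP.
  by rewrite fmorph_div rmorphM /= conjCi conjC_nat im // mulrN invrN mulrNN.
rewrite {1}[c]mpolyE [RHS]big_map; apply: eq_big_seq => m hm /=.
rewrite /amono scalerA divfK //; congr (_ *: 'X_[_]).
rewrite -[LHS](mkexpK _ m); apply: mkexp_eq => j; by rewrite ffunE ?hab.
Qed.
End W.

Unset Implicit Arguments.

Theorem lemma7 (n : nat) (hn : (0 < n)%N) (xp xm : weyl n) :
  complementary xp xm ->
  (forall k : 'I_n, wcomm (numop k) (wcomm xp xm) = 0) /\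
  in_A0_Aeq (wcomm xp xm).
Proof.
move=> [hp [hm [_ [_ [hk _]]]]].
have hA k := partA (hk k).
split => //; apply: partB.
  by move=> k; rewrite -wcomm_numop.
exact: skew_comm.
Qed.
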